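(* Let $d\in\mathbb N$ and let $(G_n)$ be a sequence of finite graphs with maximum degree at most $d$ and $\lim_{n\to\infty}|G_n|=\infty$. Then the following are equivalent: (1) $(G_n)$ is BS-convergent; (2) $(G_n)$ is $\mathrm{FO}^{\mathrm{local}}_1$-convergent; (3) $(G_n)$ is $\mathrm{FO}^{\mathrm{local}}$-convergent.
   Context: For a first-order graph formula $\phi$ with free variables among $x_1,\dots,x_p$ and a finite graph $G$, $\langle\phi,G\rangle=|\{(v_1,\dots,v_p)\in V(G)^p:G\models\phi(v_1,\dots,v_p)\}|/|G|^p$; for a set $X$ of formulas, $(G_n)$ is $X$-convergent if $\langle\phi,G_n\rangle$ converges for all $\phi\in X$. A formula $\phi$ with free variables among $x_1,\dots,x_p$ is $r$-local if for every graph $G$ and $v_1,\dots,v_p\in V(G)$, $G\models\phi(v_1,\dots,v_p)$ iff $G[N_r(v_1,\dots,v_p)]\models\phi(v_1,\dots,v_p)$, where $G[N_r(v_1,\dots,v_p)]$ is the subgraph induced by the vertices at distance at most $r$ from some $v_i$; $\phi$ is local if it is $r$-local for some $r$. $\mathrm{FO}^{\mathrm{local}}$ is the set of local formulas and $\mathrm{FO}^{\mathrm{local}}_p$ the set of local formulas with free variables among $x_1,\dots,x_p$. $(G_n)$ is BS-convergent if for every integer $r$ and every finite rooted connected graph $(F,o)$ with maximum degree at most $d$ the limit $\lim_{n\to\infty}|\{v: (B_{G_n}(v,r),v)\cong(F,o)\}|/|G_n|$ exists, where $B_G(v,r)$ is the subgraph induced by vertices at distance at most $r$ from $v$ and $\cong$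 is isomorphism of rooted graphs. *)

(* Defs.v *)
From Stdlib Require Import Reals.
From mathcomp Require Import all_boot.

Set Implicit Arguments.
Unset Strict Implicit.
Unset Printing Implicit Defensive.

Record graph := Graph {
  vert :> finType;
  adj : rel vert;
  adj_sym : symmetric adj;
  adj_irr : irreflexive adj }.

Section Induced.
Variables (G : graph) (S : {set vert G}).
Definition ind_vert : finType := {x : vert G | x \in S}.
Definition ind_adj : rel ind_vert := fun x y => adj (val x) (val y).
Lemma ind_adj_sym : symmetric ind_adj.
Proof. by move=> x y; rewrite /ind_adj adj_sym. Qed.
Lemma ind_adj_irr : irreflexive ind_adj.
Proof. by move=> x; rewrite /ind_adj adj_irr. Qed.
Definition induced : graph := Graph ind_adj_sym ind_adj_irr.
End Induced.

Fixpoint within (G : graph) (r : nat) (x y : vert G) : bool :=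
  match r with
  | 0 => x == y
  | r'.+1 => within r' x y || [exists z, within r' x z && adj z y]
  end.

Definition nbhd (G : graph) (p r : nat) (v : 'I_p -> vert G) : {set vert G} :=
  [set y | [exists i : 'I_p, within r (v i) y]].

Definition ball (G : graph) (v : vert G) (r : nat) : graph :=
  induced [set y | within r v y].

Definition max_deg_le (d : nat) (G : graph) : Prop :=
  forall v : vert G, #|[pred w | adj v w]| <= d.

Definition connected_graph (G : graph) : Prop :=
  forall x y : vert G, connect (@adj G) x y.

(** Isomorphism of rooted graphs (A, a) ~ (B, b), where the root of A is
    specified by a predicate [isroot] (used for balls, whose root is
    the centre vertex seen in the ambient graph). *)
Definition rooted_iso_b (A B : graph) (isroot : pred (vert A)) (b : vert B) : bool :=
  [exists f : {ffun vert A -> vert B}, exists g : {ffun vert B -> vert A},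
     [&& [forall x, g (f x) == x], [forall y, f (g y) == y],
         [forall x, isroot x ==> (f x == b)] &
         [forall x, forall y, adj x y == adj (f x) (f y)]]].

Definition ball_iso (G : graph) (r : nat) (v : vert G) (F : graph) (o : vert F) : bool :=
  rooted_iso_b (A := ball v r) (fun x => val x == v) o.

Inductive form :=
  | FAdj of nat & nat
  | FEq of nat & nat
  | FTrue
  | FNot of form
  | FAnd of form & form
  | FOr of form & form
  | FEx of nat & form
  | FAll of nat & form.

Fixpoint free (f : form) : seq nat :=
  match f with
  | FAdj i j | FEq i j => [:: i; j]
  | FTrue => [::]
  | FNot g => free g
  | FAnd g h | FOr g h => free g ++ free h
  | FEx i g | FAll i g => [seq k <- free g | k != i]
  end.

Definition free_among (p : nat) (f : form) : bool := all (fun k => k < p) (free f).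

(** Assignments are partial (the empty graph has no total assignment);
    unassigned variables make atoms false (never used for the formulas
    considered, whose free variables are all assigned). *)
Definition assign (V : Type) (e : nat -> option V) (i : nat) (v : V) : nat -> option V :=
  fun k => if k == i then Some v else e k.

Fixpoint sat (G : graph) (e : nat -> option (vert G)) (f : form) : bool :=
  match f with
  | FAdj i j => if (e i, e j) is (Some x, Some y) then adj x y else false
  | FEq i j => if (e i, e j) is (Some x, Some y) then x == y else false
  | FTrue => true
  | FNot g => ~~ sat e g
  | FAnd g h => sat e g && sat e h
  | FOr g h => sat e g || sat e h
  | FEx i g => [exists v : vert G, sat (assign e i v) g]
  | FAll i g => [forall v : vert G, sat (assign e i v) g]
  end.

Definition tenv (V : Type) (p : nat) (v : 'I_p -> V) : nat -> option V :=
  fun k => match @insub nat (fun k => k < p) _ k with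
           | Some j => Some (v j)
           | None => None
           end.

Definition models (G : graph) (p : nat) (f : form) (v : 'I_p -> vert G) : bool :=
  sat (tenv v) f.

Definition models_local (G : graph) (p r : nat) (f : form) (v : 'I_p -> vert G) : bool :=
  sat (G := induced (nbhd r v))
      (fun k => obind (fun x => insub x) (tenv v k)) f.

Definition r_local (p r : nat) (f : form) : Prop :=
  forall (G : graph) (v : 'I_p -> vert G), models f v = models_local r f v.

Definition FO_local_p (p : nat) (f : form) : Prop :=
  free_among p f /\ exists r, r_local p r f.

Definition stone (p : nat) (f : form) (G : graph) : R :=
  Rdiv (INR #|[pred v : {ffun 'I_p -> vert G} | models f v]|)
       (INR (#|vert G| ^ p)).

Definition converges (u : nat -> R) : Prop := exists l : R, Un_cv u l.

Definition FOlocal1_convergent (Gs : nat -> graph) : Prop :=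
  forall f, FO_local_p 1 f -> converges (fun n => stone 1 f (Gs n)).

Definition FOlocal_convergent (Gs : nat -> graph) : Prop :=
  forall p f, FO_local_p p f -> converges (fun n => stone p f (Gs n)).

Definition BS_convergent (d : nat) (Gs : nat -> graph) : Prop :=
  forall (r : nat) (F : graph) (o : vert F),
    connected_graph F -> max_deg_le d F ->
    converges (fun n =>
      Rdiv (INR #|[pred v : vert (Gs n) | ball_iso r v o]|) (INR #|vert (Gs n)|)).

(* Main.v *)
Require Import Defs.
From Stdlib Require Import Reals Lra ClassicalDescription Classical FunctionalExtensionality.
From mathcomp Require Import all_boot.
Set Implicit Arguments.
Unset Strict Implicit.
Unset Printing Implicit Defensive.

Section Within.
Variable G : graph.

Lemma within_refl r (x : vert G) : within r x x.
Proof. by elim: r => [|r IH] /=; rewrite ?eqxx ?IH. Qed.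

Lemma within_trans a b (x y z : vert G) :
  within a x y -> within b y z -> within (a + b) x z.
Proof.
elim: b z => [|b IH] z /=; first by rewrite addn0 => H /eqP <-.
rewrite addnS /= => Hxy /orP [H|/existsP [w /andP [Hw Hwz]]].
  by rewrite IH.
apply/orP; right; apply/existsP; exists w; by rewrite IH.
Qed.

Lemma within_adj (x y : vert G) : adj x y -> within 1 x y.
Proof. by move=> H /=; apply/orP; right; apply/existsP; exists x; rewrite eqxx. Qed.

Lemma within_sym r (x y : vert G) : within r x y -> within r y x.
Proof.
elim: r x y => [|r IH] x y /=; first by rewrite eq_sym.
move=> /orP [H|/existsP [z /andP [Hz Hzy]]]; first by rewrite IH.
have H1 : within 1 y z by apply: within_adj; rewrite adj_sym.
by have := within_trans H1 (IH _ _ Hz); rewrite add1n.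
Qed.

Lemma within_mono r s (x y : vert G) : r <= s -> within r x y -> within s x y.
Proof.
move=> /subnKC <- H. rewrite addnC.
have := within_trans (within_refl (s - r) x) H. by [].
Qed.

End Within.

Lemma sat_ext (G : graph) (f : form) (e e' : nat -> option (vert G)) :
  (forall k, e k = e' k) -> sat e f = sat e' f.
Proof.
move=> H. have -> : e = e' by apply: functional_extensionality. by [].
Qed.

Section IsoInv.
Variables (A B : graph) (f : vert A -> vert B) (g : vert B -> vert A).
Hypotheses (fK : cancel f g) (gK : cancel g f)
  (fadj : forall x y, adj (f x) (f y) = adj x y).

Lemma sat_iso (phi : form) (e : nat -> option (vert A)) (e' : nat -> option (vert B)) :
  (forall k, e' k = omap f (e k)) -> sat e' phi = sat e phi.
Proof.
elim: phi e e' => [i j|i j||phi IH|phi IH psi IH'|phi IH psi IH'|i phi IH|i phi IH] e e' He /=.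
- rewrite !He. case: (e i) => [x|]; case: (e j) => [y|] //=.
- rewrite !He. case: (e i) => [x|]; case: (e j) => [y|] //=.
  by rewrite (inj_eq (can_inj fK)).
- by [].
- by rewrite (IH e e').
- by rewrite (IH e e') // (IH' e e').
- by rewrite (IH e e') // (IH' e e').
- apply/existsP/existsP => [[u Hu]|[u Hu]].
    exists (g u); rewrite -(IH _ (assign e' i u)) // => k.
    by rewrite /assign; case: ifP => //= _; rewrite gK.
  exists (f u); rewrite (IH (assign e i u)) // => k.
  by rewrite /assign; case: ifP.
- apply/forallP/forallP => Hu u.
    rewrite -(IH _ (assign e' i (f u))) // => k.
    by rewrite /assign; case: ifP.
  have := Hu (g u). rewrite -(IH _ (assign e' i u)) // => k.
  by rewrite /assign; case: ifP => //= _; rewrite gK.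
Qed.
End IsoInv.

Definition isoR (A B : graph) (pa : pred (vert A)) (b : vert B) : Prop :=
  exists (f : vert A -> vert B) (g : vert B -> vert A),
    [/\ cancel f g, cancel g f, (forall x, pa x -> f x = b) &
        (forall x y, adj (f x) (f y) = adj x y)].

Lemma isoP (A B : graph) (pa : pred (vert A)) (b : vert B) :
  rooted_iso_b pa b <-> isoR pa b.
Proof.
split.
  case/existsP=> f /existsP [g /and4P [/forallP H1 /forallP H2 /forallP H3 /forallP H4]].
  exists f, g; split.
  - by move=> x; apply/eqP.
  - by move=> x; apply/eqP.
  - by move=> x Hx; have /implyP/(_ Hx)/eqP := H3 x.
  - by move=> x y; have /forallP/(_ y)/eqP := H4 x.
case=> f [g [fK gK Hr Ha]].
apply/existsP; exists [ffun x => f x]; apply/existsP; exists [ffun y => g y].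
apply/and4P; split.
- by apply/forallP => x; rewrite !ffunE fK.
- by apply/forallP => x; rewrite !ffunE gK.
- by apply/forallP => x; apply/implyP => Hx; rewrite ffunE Hr.
- by apply/forallP => x; apply/forallP => y; rewrite !ffunE Ha.
Qed.

Lemma isoR_trans (A B C : graph) (pa : pred (vert A)) (pb : pred (vert B)) (b : vert B) (c : vert C) :
  pb b -> isoR pa b -> isoR pb c -> isoR pa c.
Proof.
move=> Hb [f1 [g1 [f1K g1K H1 A1]]] [f2 [g2 [f2K g2K H2 A2]]].
exists (f2 \o f1), (g1 \o g2); split.
- by move=> x /=; rewrite f2K f1K.
- by move=> x /=; rewrite g1K g2K.
- by move=> x Hx /=; rewrite H1 // H2.
- by move=> x y /=; rewrite A2 A1.
Qed.

Lemma isoR_sym (A B : graph) (pa : pred (vert A)) (a : vert A) (b : vert B) :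
  (forall x, pa x = (x == a)) -> isoR pa b -> isoR (pred1 b) a.
Proof.
move=> Hpa [f [g [fK gK H A1]]].
exists g, f; split => //.
- move=> y /= /eqP ->. rewrite -(H a); first by rewrite fK.
  by rewrite Hpa.
- by move=> x y; rewrite -A1 !gK.
Qed.

Lemma card_bigcup_le (T I : finType) (P : pred I) (F : I -> {set T}) :
  #|\bigcup_(i | P i) F i| <= \sum_(i | P i) #|F i|.
Proof.
elim/big_rec2: _ => [|i n U _ leUn]; first by rewrite cards0.
by rewrite (leq_trans (leq_card_setU (F i) U).1) ?leq_add2l.
Qed.

Lemma card_ball_le (d : nat) (G : graph) (x : vert G) r :
  max_deg_le d G -> #|[pred y | within r x y]| <= (d.+1) ^ r.
Proof.
move=> Hd. elim: r => [|r IH].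
  rewrite expn0 (@eq_card _ _ (pred1 x)) ?card1 // => y /=.
  by rewrite !inE eq_sym.
set S := [set y | within r x y].
have HS : #|S| <= d.+1 ^ r by rewrite (eq_card (B:=[pred y | within r x y])) // => y; rewrite inE.
have Hsub : [pred y | within r.+1 x y] \subset
   (S :|: \bigcup_(z in S) [set y | adj z y]).
  apply/subsetP => y; rewrite !inE /= => /orP [H|/existsP [z /andP [Hz Hzy]]].
    by rewrite H.
  apply/orP; right. apply/bigcupP; exists z; by rewrite ?inE.
apply: (leq_trans (subset_leq_card Hsub)).
apply: (leq_trans (leq_card_setU _ _)).
apply: leq_trans (leq_add (leqnn _) (card_bigcup_le _ _)) _.
apply: (@leq_trans (#|S| + #|S| * d)).
  rewrite leq_add2l.
  apply: (@leq_trans (\sum_(z in S) d)); last by rewrite sum_nat_const.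
  apply: leq_sum => z _.
  apply: leq_trans (Hd z). apply: subset_leq_card; apply/subsetP => y.
  by rewrite !inE.
rewrite -{1}(muln1 #|S|) -mulnDr expnS mulnC add1n.
by rewrite leq_mul2l HS orbT.
Qed.

Lemma mem_ball_refl (G : graph) (v : vert G) r : v \in [set y | within r v y].
Proof. by rewrite inE within_refl. Qed.

Definition rootb (G : graph) (v : vert G) r : vert (ball v r) :=
  exist _ v (mem_ball_refl v r).

Lemma ball_rootE (G : graph) (v : vert G) r (x : vert (ball v r)) :
  (val x == v) = (x == rootb v r).
Proof. by rewrite -val_eqE. Qed.

Lemma ball_connected (G : graph) (v : vert G) r : connected_graph (ball v r).
Proof.
have Hroot : forall s (x : vert (ball v r)), s <= r -> within s v (val x) ->
    connect (@adj (ball v r)) (rootb v r) x.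
  elim=> [|s IH] x Hs /=.
    move/eqP=> Hx. have -> : x = rootb v r by apply: val_inj.
    exact: connect0.
  move=> /orP [H|/existsP [z /andP [Hz Hzx]]].
    by apply: IH => //; apply: ltnW.
  have Hzm : z \in [set y | within r v y].
    by rewrite inE; apply: within_mono Hz; apply: ltnW.
  pose zb : vert (ball v r) := exist _ z Hzm.
  apply: connect_trans (IH zb (ltnW Hs) Hz) _.
  by apply: connect1.
move=> x y.
have Hx : within r v (val x) by have := valP x; rewrite inE.
have Hy : within r v (val y) by have := valP y; rewrite inE.
apply: connect_trans (Hroot r y (leqnn r) Hy).
rewrite sym_connect_sym; first exact: (Hroot r x (leqnn r) Hx).
exact: adj_sym.
Qed.

Lemma ball_deg (d : nat) (G : graph) (v : vert G) r :
  max_deg_le d G -> max_deg_le d (ball v r).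
Proof.
move=> Hd x.
rewrite -(card_imset _ val_inj).
apply: leq_trans (Hd (val x)).
apply: subset_leq_card; apply/subsetP => y /imsetP [w Hw ->].
by rewrite inE.
Qed.

Definition RepT (M : nat) : finType :=
  {m : 'I_M.+1 & ({ffun 'I_m * 'I_m -> bool} * 'I_m)%type}.

Section Rep.
Variables (M : nat) (t : RepT M).
Definition rep_adj : rel 'I_(tag t) :=
  fun x y => (x != y) && (tagged t).1 (x, y) && (tagged t).1 (y, x).
Lemma rep_adj_sym : symmetric rep_adj.
Proof. by move=> x y; rewrite /rep_adj eq_sym andbAC. Qed.
Lemma rep_adj_irr : irreflexive rep_adj.
Proof. by move=> x; rewrite /rep_adj eqxx. Qed.
Definition repG : graph := Graph rep_adj_sym rep_adj_irr.
Definition repRoot : vert repG := (tagged t).2.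
End Rep.

Definition ballIsoRep (M : nat) (G : graph) r (w : vert G) (t : RepT M) : bool :=
  rooted_iso_b (A := ball w r) (fun x => val x == w) (repRoot t).

Lemma rep_exists (M : nat) (G : graph) r (w : vert G) :
  #|vert (ball w r)| <= M -> exists t : RepT M, ballIsoRep r w t.
Proof.
move=> HM.
set B := ball w r.
have Hm : #|vert B| < M.+1 by [].
pose t : RepT M := existT _ (Ordinal Hm)
   ([ffun xy : 'I_#|vert B| * 'I_#|vert B| => @adj B (enum_val xy.1) (enum_val xy.2)],
    enum_rank (rootb w r)).
exists t. apply/isoP.
exists (fun x : vert B => (enum_rank x : vert (repG t))).
exists (fun y : vert (repG t) => (enum_val (y : 'I_#|vert B|) : vert B)).
split.
- by move=> x; rewrite enum_rankK.
- by move=> y; rewrite enum_valK.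
- by move=> x /= /eqP Hx; congr enum_rank; apply: val_inj.
- move=> x y /=. rewrite /rep_adj /= !ffunE /= !enum_rankK.
  rewrite (inj_eq enum_rank_inj).
  case: (eqVneq x y) => [->|Hxy] /=; first by rewrite ind_adj_irr.
  by rewrite ind_adj_sym andbb.
Qed.

Section Types.
Variable M : nat.
Implicit Types t : RepT M.

Definition repIso t t' : bool :=
  rooted_iso_b (A := repG t) (pred1 (repRoot t)) (repRoot t').

Lemma repIso_refl t : repIso t t.
Proof.
apply/isoP; exists id, id; split => //. by move=> x /= /eqP.
Qed.

Lemma repIso_sym t t' : repIso t t' -> repIso t' t.
Proof. by move/isoP/(isoR_sym (a := repRoot t)) => H; apply/isoP; apply: H. Qed.

Lemma repIso_trans t1 t2 t3 : repIso t1 t2 -> repIso t2 t3 -> repIso t1 t3.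
Proof.
move=> /isoP H1 /isoP H2; apply/isoP; apply: isoR_trans H1 H2.
by rewrite /= eqxx.
Qed.

Lemma ballIso_repIso (G : graph) r (w : vert G) t t' :
  ballIsoRep r w t -> ballIsoRep r w t' -> repIso t t'.
Proof.
move=> /isoP H1 /isoP H2; apply/isoP.
have H1' := isoR_sym (a := rootb w r) (ball_rootE (r:=r) (v:=w)) H1.
apply: isoR_trans H1' H2. by rewrite /= eqxx.
Qed.

Lemma ballIso_trans (G : graph) r (w : vert G) t t' :
  ballIsoRep r w t -> repIso t t' -> ballIsoRep r w t'.
Proof.
move=> /isoP H1 /isoP H2; apply/isoP; apply: isoR_trans H1 H2.
by rewrite /= eqxx.
Qed.

Definition canon t : bool :=
  [forall t', repIso t' t ==> (enum_rank t <= enum_rank t')].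

Definition ty (G : graph) r (w : vert G) : option (RepT M) :=
  [pick t | ballIsoRep r w t && canon t].

Lemma canon_uniq (G : graph) r (w : vert G) t1 t2 :
  ballIsoRep r w t1 && canon t1 -> ballIsoRep r w t2 && canon t2 -> t1 = t2.
Proof.
move=> /andP [B1 C1] /andP [B2 C2].
have I12 := ballIso_repIso B1 B2. have I21 := ballIso_repIso B2 B1.
apply: enum_rank_inj; apply: val_inj; apply/eqP; rewrite /= eqn_leq.
by rewrite (implyP (forallP C1 t2) I21) (implyP (forallP C2 t1) I12).
Qed.

Lemma tyE (G : graph) r (w : vert G) t :
  (ty r w == Some t) = ballIsoRep r w t && canon t.
Proof.
rewrite /ty; case: pickP => [t' Ht'|H].
  apply/eqP/idP => [[<-] //|Ht]. by congr Some; apply: canon_uniq Ht' Ht.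
by rewrite H.
Qed.

Lemma ty_some (G : graph) r (w : vert G) :
  #|vert (ball w r)| <= M -> exists t, ty r w = Some t.
Proof.
move=> HM; have [t0 H0] := rep_exists HM.
have Pi0 : repIso t0 t0 by apply: repIso_refl.
case: (arg_minnP (fun t => enum_rank t) Pi0) => ts Hts Hmin.
exists ts; apply/eqP; rewrite tyE; apply/andP; split.
  by apply: ballIso_trans H0 Hts.
apply/forallP => t'; apply/implyP => Ht'.
by apply: Hmin; apply: repIso_trans Hts (repIso_sym Ht').
Qed.

Lemma ballIso_ball_iso (G G' : graph) r (w : vert G) (v0 : vert G') t :
  ballIsoRep r v0 t -> ballIsoRep r w t = ball_iso r w (rootb v0 r).
Proof.
move=> /isoP H0.
have H0' := isoR_sym (a := rootb v0 r) (ball_rootE (r:=r) (v:=v0)) H0.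
apply/idP/idP.
  move=> /isoP H; apply/isoP; apply: isoR_trans H H0'. by rewrite /= eqxx.
move=> /isoP H; apply/isoP; apply: isoR_trans H H0. by rewrite /= eqxx.
Qed.
End Types.

Record rawiso (G G' : graph) r (v : vert G) (w : vert G') (a : vert G -> vert G')
   (b : vert G' -> vert G) : Prop := RawIso {
  ri1 : forall y, within r v y -> within r w (a y);
  ri2 : forall y, within r w y -> within r v (b y);
  ri3 : forall y, within r v y -> b (a y) = y;
  ri4 : forall y, within r w y -> a (b y) = y;
  ri5 : forall y z, within r v y -> within r v z -> adj (a y) (a z) = adj y z;
  ri6 : a v = w }.

Lemma raw_of_iso (G G' : graph) r (v : vert G) (w : vert G') :
  isoR (A := ball v r) (fun x => val x == v) (rootb w r) ->
  exists a b, rawiso r v w a b.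
Proof.
case=> f [g [fK gK Hr Ha]].
pose a y := if (insub y : option (vert (ball v r))) is Some x then val (f x) else w.
pose b y := if (insub y : option (vert (ball w r))) is Some x then val (g x) else v.
have memv : forall y, within r v y -> y \in [set y | within r v y] by move=> y; rewrite inE.
have memw : forall y, within r w y -> y \in [set y | within r w y] by move=> y; rewrite inE.
have aE : forall y (H : within r v y), a y = val (f (exist _ y (memv y H))).
  by move=> y H; rewrite /a (insubT (fun y => y \in [set y | within r v y]) (memv y H)).
have bE : forall y (H : within r w y), b y = val (g (exist _ y (memw y H))).
  by move=> y H; rewrite /b (insubT (fun y => y \in [set y | within r w y]) (memw y H)).
have vf : forall x, within r w (val (f x)) by move=> x; have := valP (f x); rewrite inE.
have vg : forall x, within r v (val (g x)) by move=> x; have := valP (g x); rewrite inE.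
exists a, b; split.
- by move=> y H; rewrite (aE _ H).
- by move=> y H; rewrite (bE _ H).
- move=> y H; rewrite (aE _ H) (bE _ (vf _)).
  have -> : exist _ (val (f (exist _ y (memv y H)))) (memw _ (vf _)) = f (exist _ y (memv y H)).
    by apply: val_inj.
  by rewrite fK.
- move=> y H; rewrite (bE _ H) (aE _ (vg _)).
  have -> : exist _ (val (g (exist _ y (memw y H)))) (memv _ (vg _)) = g (exist _ y (memw y H)).
    by apply: val_inj.
  by rewrite gK.
- move=> y z Hy Hz; rewrite (aE _ Hy) (aE _ Hz).
  by have := Ha (exist _ y (memv y Hy)) (exist _ z (memv z Hz)).
- rewrite (aE _ (within_refl r v)).
  have -> : exist _ v (memv v (within_refl r v)) = rootb v r by apply: val_inj.
  by rewrite Hr //= eqxx.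
Qed.

Definition farb (G : graph) p r (v : 'I_p -> vert G) : bool :=
  [forall i, forall j, (i != j) ==> ~~ within (r + r).+1 (v i) (v j)].

Lemma far_eq (G : graph) p r (v : 'I_p -> vert G) i j y :
  farb r v -> within r (v i) y -> within r (v j) y -> i = j.
Proof.
move=> /forallP Hf Hi Hj; apply/eqP; apply/negPn/negP => Hij.
have Hn := implyP (forallP (Hf i) j) Hij.
have H := within_trans Hi (within_sym Hj).
by rewrite (within_mono (leqnSn _) H) in Hn.
Qed.

Lemma far_adj (G : graph) p r (v : 'I_p -> vert G) i j y z :
  farb r v -> within r (v i) y -> within r (v j) z -> adj y z -> i = j.
Proof.
move=> /forallP Hf Hi Hj Hyz; apply/eqP; apply/negPn/negP => Hij.
have Hn := implyP (forallP (Hf i) j) Hij.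
have H := within_trans (within_trans Hi (within_adj Hyz)) (within_sym Hj).
move: H; rewrite addn1 addSn => H. by rewrite H in Hn.
Qed.

Lemma nbhd_ex (G : graph) p r (v : 'I_p -> vert G) y :
  y \in nbhd r v -> exists i, within r (v i) y.
Proof. by rewrite inE => /existsP. Qed.

Section Consist.
Variables (G G' : graph) (p r : nat) (v : 'I_p -> vert G) (w : 'I_p -> vert G').
Variables (a : 'I_p -> vert G -> vert G') (b : 'I_p -> vert G' -> vert G).
Hypotheses (Hab : forall i, rawiso r (v i) (w i) (a i) (b i)) (Fv : farb r v) (Fw : farb r w).

Let H := induced (nbhd r v).
Let H' := induced (nbhd r w).

Let i_of (x : vert H) : 'I_p := xchoose (nbhd_ex (valP x)).
Let i_ofP (x : vert H) : within r (v (i_of x)) (val x) := xchooseP (nbhd_ex (valP x)).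
Let j_of (x : vert H') : 'I_p := xchoose (nbhd_ex (valP x)).
Let j_ofP (x : vert H') : within r (w (j_of x)) (val x) := xchooseP (nbhd_ex (valP x)).

Lemma phi_mem (x : vert H) : a (i_of x) (val x) \in nbhd r w.
Proof.
rewrite inE; apply/existsP; exists (i_of x).
by case: (Hab (i_of x)) => H1 _ _ _ _ _; apply: H1; apply: i_ofP.
Qed.
Lemma psi_mem (x : vert H') : b (j_of x) (val x) \in nbhd r v.
Proof.
rewrite inE; apply/existsP; exists (j_of x).
by case: (Hab (j_of x)) => _ H2 _ _ _ _; apply: H2; apply: j_ofP.
Qed.

Definition phiH (x : vert H) : vert H' := exist (fun y => y \in nbhd r w) _ (phi_mem x).
Definition psiH (x : vert H') : vert H := exist (fun y => y \in nbhd r v) _ (psi_mem x).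

Lemma phiHK : cancel phiH psiH.
Proof.
move=> x; apply: val_inj => /=.
set i := i_of x. set j := j_of (phiH x).
have Hi := i_ofP x.
case: (Hab i) => H1 _ H3 _ _ _.
have Hj : within r (w j) (a i (val x)) := j_ofP (phiH x).
have -> : j = i by apply: (far_eq Fw Hj (H1 _ Hi)).
by rewrite H3.
Qed.

Lemma psiHK : cancel psiH phiH.
Proof.
move=> x; apply: val_inj => /=.
set j := j_of x. set i := i_of (psiH x).
have Hj := j_ofP x.
case: (Hab j) => _ H2 _ H4 _ _.
have Hi : within r (v i) (b j (val x)) := i_ofP (psiH x).
have -> : i = j by apply: (far_eq Fv Hi (H2 _ Hj)).
by rewrite H4.
Qed.

Lemma phiH_adj (x y : vert H) : adj (phiH x) (phiH y) = adj x y.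
Proof.
rewrite /= /ind_adj /=.
have Hx := i_ofP x. have Hy := i_ofP y.
case: (eqVneq (i_of x) (i_of y)) => [E|NE].
  case: (Hab (i_of x)) => _ _ _ _ H5 _.
  rewrite -E; apply: H5 => //; by rewrite E.
case: (Hab (i_of x)) => H1 _ _ _ _ _.
case: (Hab (i_of y)) => H1' _ _ _ _ _.
have -> : adj (val x) (val y) = false.
  by apply/negP => A; move: NE; rewrite (far_adj Fv Hx Hy A) eqxx.
apply/negP => A; move: NE; by rewrite (far_adj Fw (H1 _ Hx) (H1' _ Hy) A) eqxx.
Qed.

Lemma consist_models (f : form) :
  models_local r f v = models_local r f w.
Proof.
rewrite /models_local. symmetry.
apply: (sat_iso phiHK psiHK phiH_adj) => k.
rewrite /tenv. case: insubP => [j Hj Ej|] //=.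
have mv : v j \in nbhd r v by rewrite inE; apply/existsP; exists j; apply: within_refl.
have mw : w j \in nbhd r w by rewrite inE; apply/existsP; exists j; apply: within_refl.
rewrite (insubT (fun y => y \in nbhd r v) mv) (insubT (fun y => y \in nbhd r w) mw) /=; congr Some; apply: val_inj => /=.
have Hi := i_ofP (exist _ (v j) mv).
have -> : i_of (exist _ (v j) mv) = j by apply: (far_eq Fv Hi (within_refl _ _)).
by case: (Hab j) => _ _ _ _ _ ->.
Qed.
End Consist.

Section RealLemmas.
Local Open Scope R_scope.

Lemma cv_const (c : R) : Un_cv (fun _ => c) c.
Proof.
move=> eps He; exists 0%N => n _; rewrite /Rdist Rminus_eq_0 Rabs_R0; lra.
Qed.

Lemma cv_eventually (u w : nat -> R) l N0 :
  (forall n, (N0 <= n)%N -> u n = w n) -> Un_cv w l -> Un_cv u l.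
Proof.
move=> E Hw eps He; case: (Hw eps He) => N HN.
exists (maxn N N0) => n /leP Hn.
rewrite E; last by apply: leq_trans Hn; apply: leq_maxr.
apply: HN; apply/leP; apply: leq_trans Hn; apply: leq_maxl.
Qed.

Lemma cv_squeeze (a s e : nat -> R) l N0 :
  Un_cv s l -> Un_cv e 0 ->
  (forall n, (N0 <= n)%N -> Rle (Rabs (a n - s n)) (e n)) -> Un_cv a l.
Proof.
move=> Hs He Hb eps Heps.
have He2 : Rgt (eps / 2) 0 by lra.
case: (Hs _ He2) => N1 H1. case: (He _ He2) => N2 H2.
exists (maxn (maxn N1 N2) N0) => n /leP Hn.
have Hn1 : (N1 <= n)%N by apply: leq_trans Hn; rewrite !leq_max leqnn.
have Hn2 : (N2 <= n)%N by apply: leq_trans Hn; rewrite !leq_max leqnn orbT.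
have Hn0 : (N0 <= n)%N by apply: leq_trans Hn; rewrite !leq_max leqnn orbT.
have A1 := H1 n (elimT leP Hn1). have A2 := H2 n (elimT leP Hn2).
have A3 := Hb n Hn0.
rewrite /Rdist in A1 A2 *. rewrite Rminus_0_r in A2.
have := Rabs_triang (a n - s n) (s n - l).
have -> : (a n - s n + (s n - l) = a n - l) by ring.
have := Rle_abs (e n). lra.
Qed.

Definition sumR (X : Type) (s : seq X) (u : X -> R) : R :=
  foldr (fun x acc => u x + acc) 0 s.
Definition prodR (X : Type) (s : seq X) (u : X -> R) : R :=
  foldr (fun x acc => u x * acc) 1 s.

Lemma cv_sumR (X : Type) (s : seq X) (u : X -> nat -> R) (l : X -> R) :
  (forall x, Un_cv (u x) (l x)) ->
  Un_cv (fun n => sumR s (fun x => u x n)) (sumR s l).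
Proof.
move=> H; elim: s => [|x s IH] /=; first exact: cv_const.
exact: CV_plus.
Qed.

Lemma cv_prodR (X : Type) (s : seq X) (u : X -> nat -> R) (l : X -> R) :
  (forall x, Un_cv (u x) (l x)) ->
  Un_cv (fun n => prodR s (fun x => u x n)) (prodR s l).
Proof.
move=> H; elim: s => [|x s IH] /=; first exact: cv_const.
exact: CV_mult.
Qed.

Lemma INR_sum (X : Type) (s : seq X) (a : X -> nat) :
  INR (\sum_(x <- s) a x) = sumR s (fun x => INR (a x)).
Proof.
elim: s => [|x s IH]; first by rewrite big_nil.
by rewrite big_cons plus_INR IH.
Qed.

Lemma INR_prod (X : Type) (s : seq X) (a : X -> nat) :
  INR (foldr muln 1%N [seq a x | x <- s]) = prodR s (fun x => INR (a x)).
Proof.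
elim: s => [|x s IH] //=.
by rewrite mult_INR IH.
Qed.

Lemma prodR_div (X : Type) (s : seq X) (u : X -> R) (c : R) :
  c <> 0 -> (prodR s u / c ^ size s) = prodR s (fun x => (u x / c)).
Proof.
move=> Hc; elim: s => [|x s IH] /=; first by field.
rewrite -IH. field. split => //. by apply: pow_nonzero.
Qed.

Lemma sumR_mul (X : Type) (s : seq X) (u : X -> R) (c : R) :
  (sumR s u * c = sumR s (fun x => u x * c)).
Proof. elim: s => [|x s IH] /=; first by ring. by rewrite -IH; ring. Qed.

Lemma sumR_ext (X : Type) (s : seq X) (u w : X -> R) :
  (forall x, u x = w x) -> sumR s u = sumR s w.
Proof. by move=> H; elim: s => [|x s IH] //=; rewrite IH H. Qed.

Lemma cv_inv_size (N : nat -> nat) (C : R) :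
  (forall M : nat, exists K : nat, forall n, (K <= n)%N -> (M <= N n)%N) ->
  Un_cv (fun n => C / INR (N n)) 0.
Proof.
move=> HN eps He.
have Hc : Rlt 0 (eps / (Rabs C + 1)).
  apply: Rdiv_lt_0_compat => //. have := Rabs_pos C. lra.
case: (archimed_cor1 _ Hc) => K0 [HK0 K0pos].
case: (HN K0) => K HK.
exists K => n /leP Hn. have := HK n Hn => /leP HM.
have HK0p : Rlt 0 (INR K0) by apply: lt_0_INR.
have HNn : Rle (INR K0) (INR (N n)) by apply: le_INR.
have HNpos : Rlt 0 (INR (N n)) by lra.
rewrite /Rdist Rminus_0_r /Rdiv Rabs_mult Rabs_inv (Rabs_right (INR _)); last lra.
have H1 : Rle (/ INR (N n)) (/ INR K0) by apply: Rinv_le_contravar.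
have H2 : Rle (Rabs C * / INR (N n)) ((Rabs C + 1) * / INR K0).
  apply: Rmult_le_compat; [exact: Rabs_pos| left; apply: Rinv_0_lt_compat => // | lra | exact: H1].
have H3 : Rlt ((Rabs C + 1) * / INR K0) ((Rabs C + 1) * (eps / (Rabs C + 1))).
  apply: Rmult_lt_compat_l => //. have := Rabs_pos C. lra.
have H4 : ((Rabs C + 1) * (eps / (Rabs C + 1)) = eps).
  field. have := Rabs_pos C. lra.
lra.
Qed.

Lemma err_bound (A S B N Np C : nat) :
  (0 < N)%N -> (0 < Np)%N -> (A <= S + B)%N -> (S <= A + B)%N -> (N * B <= C * Np)%N ->
  Rle (Rabs (INR A / INR Np - INR S / INR Np)) (INR C / INR N).
Proof.
move=> /ltP HN /ltP HNp /leP H1 /leP H2 /leP H3.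
have {H1}H1 := le_INR _ _ H1. have {H2}H2 := le_INR _ _ H2. have {H3}H3 := le_INR _ _ H3.
rewrite plus_INR in H1. rewrite plus_INR in H2. rewrite !mult_INR in H3.
have HN' : Rlt 0 (INR N) by apply: lt_0_INR.
have HNp' : Rlt 0 (INR Np) by apply: lt_0_INR.
have HB : Rle (INR B / INR Np) (INR C / INR N).
  apply: (Rmult_le_reg_r (INR N * INR Np)); first by apply: Rmult_lt_0_compat.
  have -> : INR B / INR Np * (INR N * INR Np) = INR N * INR B by (field; lra).
  have -> : INR C / INR N * (INR N * INR Np) = INR C * INR Np by (field; lra).
  exact: H3.
have -> : INR A / INR Np - INR S / INR Np = (INR A - INR S) / INR Np by (field; lra).
rewrite /Rdiv Rabs_mult Rabs_inv (Rabs_right (INR Np)); last lra.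
apply: Rle_trans HB. rewrite /Rdiv.
apply: Rmult_le_compat_r; first by left; apply: Rinv_0_lt_compat.
apply: Rabs_le; split; lra.
Qed.

Lemma INR_expn (N k : nat) : INR (N ^ k) = INR N ^ k.
Proof. elim: k => [|k IH] //. by rewrite expnS mult_INR IH. Qed.

Lemma main_eq (X I : Type) (ts : seq X) (js : seq I) (ph : X -> nat) (c : X -> I -> nat) (N : nat) :
  N <> 0%N ->
  INR (\sum_(t <- ts) ph t * foldr muln 1%N [seq c t i | i <- js]) / INR (N ^ size js)
  = sumR ts (fun t => INR (ph t) * prodR js (fun i => INR (c t i) / INR N)).
Proof.
move=> HN. have HN' : INR N <> 0 by apply: not_0_INR.
rewrite INR_sum /Rdiv sumR_mul. apply: sumR_ext => t.
rewrite mult_INR INR_prod INR_expn Rmult_assoc. congr (_ * _).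
by rewrite -prodR_div.
Qed.

End RealLemmas.

Lemma card_sumb (T : finType) (P : pred T) : #|[pred x | P x]| = \sum_x (P x : nat).
Proof.
rewrite -sum1_card big_mkcond /=; apply: eq_bigr => x _; rewrite inE; by case: (P x).
Qed.

Lemma sum_partition (T X : finType) (h : T -> X) (F : X -> nat) :
  \sum_x F (h x) = \sum_t F t * #|[pred x | h x == t]|.
Proof.
rewrite (partition_big h predT) //=.
apply: eq_bigr => t _.
rewrite card_sumb big_distrr /= big_mkcond /=.
apply: eq_bigr => x _. case: (eqVneq (h x) t) => [->|] /=; by rewrite ?muln1 ?muln0.
Qed.

Lemma card_tyv (p : nat) (G : graph) (X : finType) (h : vert G -> X) (t : {ffun 'I_p -> X}) :
  #|[pred v : {ffun 'I_p -> vert G} | [ffun i => h (v i)] == t]| =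
  foldr muln 1 [seq #|[pred w | h w == t i]| | i : 'I_p].
Proof.
rewrite -(card_family (fun i => [pred w | h w == t i])).
apply: eq_card => v /=. rewrite !inE.
apply/eqP/familyP => [<- i|H]; first by rewrite ffunE inE.
apply/ffunP => i; rewrite ffunE; apply/eqP. by have := H i; rewrite inE.
Qed.

Lemma close_bound (G : graph) (p R K : nat) (i j : 'I_p) :
  i != j -> (forall x : vert G, #|[pred z | within R x z]| <= K) ->
  #|vert G| * #|[pred v : {ffun 'I_p -> vert G} | within R (v i) (v j)]| <= K * #|vert G| ^ p.
Proof.
move=> Hij HK.
set N := #|vert G|.
pose P (v : {ffun 'I_p -> vert G}) := within R (v i) (v j).
pose upd (v : {ffun 'I_p -> vert G}) z : {ffun 'I_p -> vert G} :=
  [ffun k => if k == j then z else v k].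
pose h (vz : {ffun 'I_p -> vert G} * vert G) := (upd vz.1 vz.2, vz.1 j).
have hK : involutive h.
  case=> v z; rewrite /h /upd /=; congr pair; last by rewrite ffunE eqxx.
  apply/ffunP => k; rewrite !ffunE; case: (eqVneq k j) => [->|] //=.
have hinj : injective h := inv_inj hK.
have E1 : \sum_(vz : {ffun 'I_p -> vert G} * vert G) (P vz.1 : nat) = N * #|[pred v | P v]|.
  rewrite -(pair_big xpredT xpredT (fun v z => (P v : nat))) /=.
  rewrite card_sumb big_distrr /=. apply: eq_bigr => v _.
  by rewrite sum_nat_const /N mulnC.
have E2 : \sum_(vz : {ffun 'I_p -> vert G} * vert G) (P vz.1 : nat) =
          \sum_(vz : {ffun 'I_p -> vert G} * vert G) (P (h vz).1 : nat).
  by rewrite (reindex_inj hinj).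
rewrite -E1 E2 -(pair_big xpredT xpredT (fun v z => (P (h (v, z)).1 : nat))) /=.
apply: (@leq_trans (\sum_(v : {ffun 'I_p -> vert G}) K)); last first.
  by rewrite sum_nat_const card_ffun card_ord mulnC.
apply: leq_sum => v _.
apply: leq_trans (HK (v i)).
rewrite card_sumb. apply: eq_leq; apply: eq_bigr => z _.
rewrite /P /h /upd /= !ffunE eqxx. by rewrite (negbTE Hij).
Qed.

Lemma far_bound (d : nat) (G : graph) (p r : nat) :
  max_deg_le d G ->
  #|vert G| * #|[pred v : {ffun 'I_p -> vert G} | ~~ farb r v]|
    <= p * p * (d.+1 ^ (r + r).+1) * #|vert G| ^ p.
Proof.
move=> Hd.
set R := (r + r).+1. set K := d.+1 ^ R. set N := #|vert G|.
have HK : forall x : vert G, #|[pred z | within R x z]| <= K by move=> x; apply: card_ball_le.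
have Hpt : forall v : {ffun 'I_p -> vert G}, (~~ farb r v : nat) <=
    \sum_(i : 'I_p) \sum_(j : 'I_p) ((i != j) && within R (v i) (v j) : nat).
  move=> v. case: (boolP (farb r v)) => //= /forallPn [i /forallPn [j]].
  rewrite negb_imply negbK => /andP [Hij Hw].
  apply: (@leq_trans ((i != j) && within R (v i) (v j))); first by rewrite Hij; move: Hw; rewrite -/R => ->.
  apply: (@leq_trans (\sum_(j0 < p) ((i != j0) && within R (v i) (v j0)))).
    by rewrite (bigD1 j) //; apply: leq_addr.
  by rewrite [X in _ <= X](bigD1 i) //; apply: leq_addr.
apply: (@leq_trans (N * \sum_(v : {ffun 'I_p -> vert G})
     \sum_(i : 'I_p) \sum_(j : 'I_p) ((i != j) && within R (v i) (v j) : nat))).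
  rewrite leq_mul2l card_sumb leq_sum ?orbT // => v _; exact: Hpt.
rewrite exchange_big big_distrr.
apply: (@leq_trans (\sum_(i : 'I_p) p * K * N ^ p)); last first.
  by rewrite sum_nat_const card_ord !mulnA.
apply: leq_sum => i _.
rewrite exchange_big big_distrr.
apply: (@leq_trans (\sum_(j : 'I_p) K * N ^ p)); last first.
  by rewrite sum_nat_const card_ord !mulnA.
apply: leq_sum => j _.
case: (eqVneq i j) => [->|Hij].
  rewrite big1 /=; first by rewrite muln0.
  by [].
have E : \sum_(v : {ffun 'I_p -> vert G}) (~~ false && within R (v i) (v j) : nat) =
   #|[pred v : {ffun 'I_p -> vert G} | within R (v i) (v j)]| by rewrite card_sumb.
rewrite E; exact: close_bound Hij HK.
Qed.

Lemma card_ball_vert (d : nat) (G : graph) (w : vert G) r :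
  max_deg_le d G -> #|vert (ball w r)| <= d.+1 ^ r.
Proof.
move=> Hd. have := card_ball_le w r Hd. apply: leq_trans.
rewrite card_sig. apply: eq_leq; apply: eq_card => y; by rewrite !inE.
Qed.

Section Main13.
Variables (d : nat) (Gs : nat -> graph).
Hypotheses (Hdeg : forall n, max_deg_le d (Gs n))
  (Hsize : forall M : nat, exists N : nat, forall n, N <= n -> M <= #|vert (Gs n)|)
  (HBS : BS_convergent d Gs).
Variables (p r : nat) (f : form).
Hypothesis (Hloc : r_local p r f).

Let M := d.+1 ^ r.
Let T := RepT M.

Definition tyn n (w : vert (Gs n)) : option T := ty M r w.

Lemma tyn_some n (w : vert (Gs n)) : exists t, tyn w = Some t.
Proof. by apply: ty_some; apply: card_ball_vert. Qed.

Definition tyv n (v : {ffun 'I_p -> vert (Gs n)}) : {ffun 'I_p -> option T} :=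
  [ffun i => tyn (v i)].

Definition Phi (t : {ffun 'I_p -> option T}) : Prop :=
  exists n (v : {ffun 'I_p -> vert (Gs n)}), farb r v && (tyv v == t) && models f v.

Definition Phib t : bool := if excluded_middle_informative (Phi t) then true else false.

Lemma PhibP t : reflect (Phi t) (Phib t).
Proof. rewrite /Phib; case: excluded_middle_informative => H; by constructor. Qed.

Lemma far_models n (v : {ffun 'I_p -> vert (Gs n)}) :
  farb r v -> models f v = Phib (tyv v).
Proof.
move=> Fv. case: (PhibP (tyv v)) => [HP|HN].
  case: HP => m [v' /andP [/andP [Fv' /eqP E] Hm]].
  rewrite -Hm !Hloc.
  have Hab : forall i, exists ab : (vert (Gs n) -> vert (Gs m)) * (vert (Gs m) -> vert (Gs n)),
      rawiso r (v i) (v' i) ab.1 ab.2.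
    move=> i. have [t Ht] := tyn_some (v i).
    have Ht' : tyn (v' i) = Some t.
      by have := congr1 (fun g : {ffun 'I_p -> option T} => g i) E; rewrite !ffunE Ht.
    move: Ht Ht' => /eqP; rewrite /tyn tyE => /andP [B1 _] /eqP; rewrite tyE => /andP [B2 _].
    rewrite (ballIso_ball_iso _ B2) in B1.
    have [a [b Hab]] := raw_of_iso (proj1 (isoP _ _) B1).
    by exists (a, b).
  have [u Hu] := fin_all_exists Hab.
  exact: (consist_models (a := fun i => (u i).1) (b := fun i => (u i).2) Hu Fv Fv').
apply/negP => Hm; apply: HN; exists n, v. by rewrite Fv eqxx Hm.
Qed.

Definition cnt n (tau : option T) : nat := #|[pred w : vert (Gs n) | tyn w == tau]|.

Lemma count_bounds n :
  let A := #|[pred v : {ffun 'I_p -> vert (Gs n)} | models f v]| in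
  let S := \sum_(t : {ffun 'I_p -> option T}) Phib t * foldr muln 1 [seq cnt n (t i) | i : 'I_p] in
  let B := #|[pred v : {ffun 'I_p -> vert (Gs n)} | ~~ farb r v]| in
  A <= S + B /\ S <= A + B.
Proof.
move=> A S B.
have ES : S = \sum_(v : {ffun 'I_p -> vert (Gs n)}) (Phib (tyv v) : nat).
  rewrite (sum_partition (@tyv n) (fun t => (Phib t : nat))) /S.
  apply: eq_bigr => t _. congr (_ * _). by rewrite card_tyv.
rewrite ES /A /B (@card_sumb _ (fun v : {ffun 'I_p -> vert (Gs n)} => models f v)) (@card_sumb _ (fun v : {ffun 'I_p -> vert (Gs n)} => ~~ farb r v)) -!big_split /=; split; apply: leq_sum => v _.
  case: (boolP (farb r v)) => Fv /=; last by rewrite addn1; case: (models f v).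
  by rewrite (far_models Fv) addn0.
case: (boolP (farb r v)) => Fv /=; last by rewrite addn1; case: (Phib _).
by rewrite (far_models Fv) addn0.
Qed.

Lemma cnt_cv tau : converges (fun n => Rdiv (INR (cnt n tau)) (INR #|vert (Gs n)|)).
Proof.
have Z : converges (fun n : nat => Rdiv (INR 0) (INR #|vert (Gs n)|)).
  exists R0. apply: (@cv_eventually _ _ _ 0) (cv_const R0) => n _.
  by rewrite /Rdiv Rmult_0_l.
case: tau => [t|]; last first.
  have E : forall n, cnt n None = 0.
    move=> n; rewrite /cnt; apply: eq_card0 => w; rewrite !inE /=.
    by have [t0 ->] := tyn_some w.
  by move: Z; congr converges; apply: functional_extensionality => n; rewrite E.
have E1 : forall n, cnt n (Some t) = #|[pred w : vert (Gs n) | ballIsoRep r w t && canon t]|.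
  by move=> n; apply: eq_card => w; rewrite !inE /tyn tyE.
case: (boolP (canon t)) => Ct; last first.
  move: Z; congr converges; apply: functional_extensionality => n; rewrite E1.
  by congr (Rdiv (INR _) _); apply/esym/eq_card0 => w; rewrite !inE /= (negbTE Ct) andbF.
case: (classic (exists m (v0 : vert (Gs m)), ballIsoRep r v0 t)) => [[m [v0 H0]]|HN].
  have := HBS r (rootb v0 r) (@ball_connected _ v0 r) (@ball_deg _ _ v0 r (@Hdeg m)).
  congr converges; apply: functional_extensionality => n; rewrite E1.
  congr (Rdiv (INR _) _); apply: eq_card => w; by rewrite !inE /= Ct andbT (ballIso_ball_iso w H0).
move: Z; congr converges; apply: functional_extensionality => n; rewrite E1.
congr (Rdiv (INR _) _); apply/esym/eq_card0 => w /=.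
apply/negP => /andP [Hw _]; apply: HN; exists n, w; exact: Hw.
Qed.

Lemma main13 : converges (fun n => stone p f (Gs n)).
Proof.
have Hl : forall tau : option T, exists l,
    Un_cv (fun n => Rdiv (INR (cnt n tau)) (INR #|vert (Gs n)|)) l.
  by move=> tau; apply: cnt_cv.
have [l Hlim] := fin_all_exists Hl.
pose ts := index_enum {ffun 'I_p -> option T}.
pose s n := sumR ts (fun t => Rmult (INR (Phib t))
      (prodR (enum 'I_p) (fun i => Rdiv (INR (cnt n (t i))) (INR #|vert (Gs n)|)))).
exists (sumR ts (fun t => Rmult (INR (Phib t)) (prodR (enum 'I_p) (fun i => l (t i))))).
have Hs : Un_cv s (sumR ts (fun t => Rmult (INR (Phib t)) (prodR (enum 'I_p) (fun i => l (t i))))).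
  apply: cv_sumR => t. apply: CV_mult; first exact: cv_const.
  apply: cv_prodR => i; exact: Hlim.
have [N1 HN1] := Hsize 1.
pose S n := \sum_(t <- ts) Phib t * foldr muln 1 [seq cnt n (t i) | i <- enum 'I_p].
have Hs' : Un_cv (fun n => Rdiv (INR (S n)) (INR (#|vert (Gs n)| ^ p)))
   (sumR ts (fun t => Rmult (INR (Phib t)) (prodR (enum 'I_p) (fun i => l (t i))))).
  apply: (@cv_eventually _ _ _ N1) Hs => n Hn.
  have HN : #|vert (Gs n)| <> 0 by have := HN1 n Hn; case: #|vert (Gs n)|.
  have := main_eq ts (enum 'I_p) (fun t => (Phib t : nat)) (fun t i => cnt n (t i)) HN.
  by rewrite size_enum_ord.
apply: (@cv_squeeze _ _ _ _ N1 Hs' (cv_inv_size (INR (p * p * d.+1 ^ (r + r).+1)) Hsize)).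
move=> n Hn. rewrite /stone.
have [Hb1 Hb2] := count_bounds n.
apply: (@err_bound _ _ #|[pred v : {ffun 'I_p -> vert (Gs n)} | ~~ farb r v]|) => //.
- exact: HN1 n Hn.
- by rewrite expn_gt0 HN1.
- exact: far_bound.
Qed.

End Main13.

Fixpoint Dist (r a b m : nat) : form :=
  match r with
  | 0 => FEq a b
  | r'.+1 => FOr (Dist r' a b m) (FEx m (FAnd (Dist r' a m m.+1) (FAdj m b)))
  end.

Definition FAnds (l : seq form) : form := foldr FAnd FTrue l.
Definition FOrs (l : seq form) : form := foldr FOr (FNot FTrue) l.
Definition FExs (vs : seq nat) (g : form) : form := foldr FEx g vs.

Lemma sat_FAnds (G : graph) e l : @sat G e (FAnds l) = all (sat e) l.
Proof. by elim: l => //= h l ->. Qed.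

Lemma sat_FOrs (G : graph) e l : @sat G e (FOrs l) = has (sat e) l.
Proof. by elim: l => //= h l ->. Qed.

Lemma sat_Dist (G : graph) r (e : nat -> option (vert G)) a b m :
  a < m -> b < m ->
  sat e (Dist r a b m) =
  if (e a, e b) is (Some x, Some y) then within r x y else false.
Proof.
elim: r e b m => [|r IH] e b m Ha Hb /=.
  by case: (e a) => [x|]; case: (e b) => [y|].
rewrite IH //.
have E : forall z, sat (assign e m z) (Dist r a m m.+1) =
    if e a is Some x then within r x z else false.
  move=> z; rewrite IH; last exact: ltnSn.
    by rewrite /assign (ltn_eqF Ha) eqxx.
  exact: ltn_trans Ha (ltnSn m).
case Ea: (e a) => [x|]; case Eb: (e b) => [y|] /=.
- congr orb; apply: eq_existsb => z.
  by rewrite E Ea /= /assign eqxx (ltn_eqF Hb) Eb.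
- apply/existsP => [[z]]; by rewrite /= /assign eqxx (ltn_eqF Hb) Eb andbF.
- apply/existsP => [[z]]; by rewrite /= E Ea.
- apply/existsP => [[z]]; by rewrite /= E Ea.
Qed.

Lemma sat_FExs (G : graph) (z0 : vert G) (vs : seq nat) g e :
  uniq vs ->
  (sat e (FExs vs g) <-> exists y : nat -> vert G,
      sat (fun n => if n \in vs then Some (y n) else e n) g).
Proof.
elim: vs e => [|v vs IH] e /=.
  move=> _; split; first by move=> H; exists (fun _ => z0); apply: etrans H; apply: sat_ext.
  by case=> y H; apply: etrans H; apply: sat_ext.
case/andP => Hv Hu; split.
  case/existsP => w /(IH _ Hu) [y Hy].
  exists (fun n => if n == v then w else y n).
  apply: etrans Hy; apply: sat_ext => n. rewrite in_cons /assign.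
  case: (eqVneq n v) => [->|Hnv] /=; first by rewrite (negbTE Hv).
  by case: (n \in vs).
case=> y Hy; apply/existsP; exists (y v); apply/(IH _ Hu); exists y.
apply: etrans Hy; apply: sat_ext => n. rewrite in_cons /assign.
case: (eqVneq n v) => [->|Hnv] /=; first by rewrite (negbTE Hv).
by case: (n \in vs).
Qed.

Lemma allP_enum (T : finType) (P : pred T) : all P (enum T) = [forall x, P x].
Proof.
apply/allP/forallP => H x; first by apply: H; rewrite mem_enum.
by move=> _; apply: H.
Qed.

Section Formula.
Variables (F : graph) (o : vert F) (r : nat).

Definition vi (u : vert F) : nat := (index u (enum F)).+1.
Definition Bv : nat := (size (enum F)).+1.
Definition vs : seq nat := [seq vi u | u <- enum F].

Lemma vi_inj : injective vi.
Proof.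
move=> u u' [] E.
by rewrite -(nth_index o (mem_enum F u)) E nth_index // mem_enum.
Qed.

Lemma vi_lt u : vi u < Bv.
Proof. by rewrite /vi /Bv ltnS index_mem mem_enum. Qed.

Lemma vs_uniq : uniq vs.
Proof. by rewrite map_inj_uniq ?enum_uniq //; apply: vi_inj. Qed.

Lemma mem_vs n : (n \in vs) = (0 < n < Bv).
Proof.
apply/mapP/idP => [[u _ ->]|/andP [H1 H2]]; first by rewrite vi_lt.
exists (nth o (enum F) n.-1); first by rewrite mem_nth // -ltnS prednK.
rewrite /vi index_uniq ?enum_uniq ?prednK //.
Qed.

Definition Distinct : form :=
  FAnds [seq FAnds [seq (if u == u' then FTrue else FNot (FEq (vi u) (vi u'))) | u' <- enum F]
        | u <- enum F].
Definition Adjs : form :=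
  FAnds [seq FAnds [seq (if adj u u' then FAdj (vi u) (vi u') else FNot (FAdj (vi u) (vi u')))
        | u' <- enum F] | u <- enum F].
Definition Root : form := FEq (vi o) 0.
Definition InBall : form := FAnds [seq Dist r 0 (vi u) Bv | u <- enum F].
Definition Cover : form :=
  FAll Bv (FOr (FNot (Dist r 0 Bv Bv.+1)) (FOrs [seq FEq Bv (vi u) | u <- enum F])).

Definition phiF : form := FExs vs (FAnds [:: Distinct; Adjs; Root; InBall; Cover]).

Section Sem.
Variables (G : graph) (x : vert G) (y : nat -> vert G) (e : nat -> option (vert G)).
Hypothesis e0 : e 0 = Some x.
Let E n := if n \in vs then Some (y n) else e n.
Let Y u := y (vi u).

Lemma E0 : E 0 = Some x.
Proof. by rewrite /E mem_vs. Qed.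
Lemma Evi u : E (vi u) = Some (Y u).
Proof. by rewrite /E mem_vs vi_lt. Qed.
Lemma EB : E Bv = e Bv.
Proof. by rewrite /E mem_vs ltnn andbF. Qed.

Lemma sem_Distinct : sat E Distinct = [forall u, forall u', (u != u') ==> (Y u != Y u')].
Proof.
rewrite /Distinct sat_FAnds all_map -allP_enum; apply: eq_all => u /=.
rewrite sat_FAnds all_map -allP_enum; apply: eq_all => u' /=.
case: (eqVneq u u') => //= _. by rewrite !Evi.
Qed.

Lemma sem_Adjs : sat E Adjs = [forall u, forall u', adj (Y u) (Y u') == adj u u'].
Proof.
rewrite /Adjs sat_FAnds all_map -allP_enum; apply: eq_all => u /=.
rewrite sat_FAnds all_map -allP_enum; apply: eq_all => u' /=.
case: (adj u u') => /=; rewrite !Evi //=; by case: (adj _ _).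
Qed.

Lemma sem_Root : sat E Root = (Y o == x).
Proof. by rewrite /= Evi E0. Qed.

Lemma sem_InBall : sat E InBall = [forall u, within r x (Y u)].
Proof.
rewrite /InBall sat_FAnds all_map -allP_enum; apply: eq_all => u /=.
by rewrite sat_Dist ?vi_lt // E0 Evi.
Qed.

Lemma sem_Cover : sat E Cover = [forall z, within r x z ==> [exists u, z == Y u]].
Proof.
rewrite /Cover /=; apply: eq_forallb => z.
have A0 : assign E Bv z 0 = Some x by rewrite /assign E0.
have AB : assign E Bv z Bv = Some z by rewrite /assign eqxx.
rewrite sat_Dist // A0 AB /= sat_FOrs has_map.
rewrite -implybE; congr (_ ==> _).
have -> : has (fun u => sat (assign E Bv z) (FEq Bv (vi u))) (enum F) = has (fun u => z == Y u) (enum F).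
  apply: eq_has => u /=. by rewrite AB /assign (ltn_eqF (vi_lt u)) Evi.
apply/hasP/existsP => [[u _ H]|[u H]]; first by exists u.
by exists u; rewrite ?mem_enum.
Qed.
End Sem.

Lemma all5 (T : Type) (P : pred T) a b c d e :
  all P [:: a; b; c; d; e] = [&& P a, P b, P c, P d & P e].
Proof. by rewrite /= andbT. Qed.

Lemma sem_phi (G : graph) (x : vert G) (e : nat -> option (vert G)) :
  e 0 = Some x -> sat e phiF = ball_iso r x o.
Proof.
move=> e0. apply/idP/idP.
  move/(sat_FExs x _ _ vs_uniq) => [y].
  rewrite sat_FAnds all5.
  rewrite (sem_Distinct y e) (sem_Adjs y e) (sem_Root y e0) (sem_InBall y e0) (sem_Cover y e0).
  case/and5P => /forallP D /forallP Ad /eqP R /forallP I /forallP C.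
  set Y := fun u => y (vi u).
  have Yinj : injective Y.
    move=> u u' E1; apply/eqP/negPn/negP => N.
    by have := implyP (forallP (D u) u') N; rewrite /Y in E1; rewrite E1 eqxx.
  apply/isoP.
  pose g (u : vert F) : vert (ball x r) := exist _ (Y u) (etrans (in_set _ _) (I u)).
  have Cov : forall a : vert (ball x r), exists u, val a == Y u.
    move=> a. have Ha : within r x (val a) by have := valP a; rewrite inE.
    by have /existsP := implyP (C (val a)) Ha.
  pose f (a : vert (ball x r)) : vert F := odflt o [pick u | val a == Y u].
  have fP : forall a, val a = Y (f a).
    move=> a; rewrite /f; case: pickP => [u /eqP //|H].
    by case: (Cov a) => u Hu; move: (H u); rewrite Hu.
  exists f, g; split.
  - by move=> a; apply: val_inj; rewrite /= -fP.
  - by move=> u; apply: Yinj; rewrite -fP.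
  - by move=> a /eqP Ha; apply: Yinj; rewrite -fP Ha /Y R.
  - move=> a b. rewrite /= /ind_adj (fP a) (fP b).
    by apply/esym/eqP; apply: (forallP (Ad (f a)) (f b)).
move/isoP=> [f [g [fK gK Hr Ha]]].
apply/(sat_FExs x _ _ vs_uniq).
exists (fun n => val (g (nth o (enum F) n.-1))).
rewrite sat_FAnds all5.
rewrite (sem_Distinct _ e) (sem_Adjs _ e) (sem_Root _ e0) (sem_InBall _ e0) (sem_Cover _ e0).
have Yv : forall u, nth o (enum F) (vi u).-1 = u by move=> u; rewrite /vi /= nth_index ?mem_enum.
apply/and5P; split.
- apply/forallP => u; apply/forallP => u'; apply/implyP => N. rewrite !Yv.
  apply/negP => /eqP E1. have : g u = g u' by apply: val_inj.
  by move/(congr1 f); rewrite !gK => E2; rewrite E2 eqxx in N.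
- apply/forallP => u; apply/forallP => u'. rewrite !Yv.
  have := Ha (g u) (g u'). by rewrite !gK /= /ind_adj => ->.
- rewrite Yv. have Hf : f (rootb x r) = o by apply: Hr; rewrite /= eqxx.
  by rewrite -Hf fK.
- apply/forallP => u. rewrite Yv. by have := valP (g u); rewrite inE.
- apply/forallP => z; apply/implyP => Hz.
  have Hm : z \in [set y | within r x y] by rewrite inE.
  apply/existsP; exists (f (exist _ z Hm)). by rewrite Yv fK.
Qed.
End Formula.

Lemma free_FAnds x l : x \in free (FAnds l) -> has (fun h => x \in free h) l.
Proof. elim: l => //= h l IH; rewrite mem_cat => /orP [->//|/IH ->]; by rewrite orbT. Qed.

Lemma free_FOrs x l : x \in free (FOrs l) -> has (fun h => x \in free h) l.
Proof. elim: l => //= h l IH; rewrite mem_cat => /orP [->//|/IH ->]; by rewrite orbT. Qed.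

Lemma free_FAnds_map (X : eqType) x (g : X -> form) (s : seq X) :
  x \in free (FAnds (map g s)) -> exists2 u, u \in s & x \in free (g u).
Proof. by move/free_FAnds; rewrite has_map => /hasP. Qed.

Lemma free_FOrs_map (X : eqType) x (g : X -> form) (s : seq X) :
  x \in free (FOrs (map g s)) -> exists2 u, u \in s & x \in free (g u).
Proof. by move/free_FOrs; rewrite has_map => /hasP. Qed.

Lemma free_FExs x vs0 g : x \in free (FExs vs0 g) -> (x \in free g) && (x \notin vs0).
Proof.
elim: vs0 => [->//|v vs0 IH] /=; rewrite mem_filter => /andP [Hxv /IH /andP [-> H]].
by rewrite in_cons negb_or Hxv H.
Qed.

Lemma free_Dist x r a b m : a < m -> b < m -> x \in free (Dist r a b m) -> (x == a) || (x == b).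
Proof.
elim: r b m => [|r IH] b m Ha Hb /=; first by rewrite !in_cons in_nil orbF.
rewrite mem_cat => /orP [/IH -> //|].
rewrite mem_filter => /andP [Hxm]; rewrite mem_cat => /orP [|].
  move/IH => /(_ (ltn_trans Ha (ltnSn m)) (ltnSn m)) /orP [->//|/eqP E].
  by rewrite E eqxx in Hxm.
rewrite !in_cons in_nil orbF => /orP [/eqP E|->]; last by rewrite orbT.
by rewrite E eqxx in Hxm.
Qed.

Lemma has5 (T : Type) (P : pred T) a b c d e :
  has P [:: a; b; c; d; e] = [|| P a, P b, P c, P d | P e].
Proof. by rewrite /= orbF. Qed.

Lemma phiF_free (F : graph) (o : vert F) r : free_among 1 (phiF o r).
Proof.
apply/allP => x /free_FExs /andP [Hx Hnv].
suff : (x == 0) || (x \in vs F) by rewrite (negbTE Hnv) orbF => /eqP ->.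
move: Hx => /free_FAnds; rewrite has5.
have Hvi : forall u : vert F, vi u \in vs F by move=> u; rewrite (mem_vs o) vi_lt.
case/orP => [|/orP [|/orP [|/orP [|]]]].
- move=> /free_FAnds_map [u _ /free_FAnds_map [u' _]].
  case: (u == u') => //=. rewrite !in_cons in_nil orbF => /orP [] /eqP ->; by rewrite Hvi orbT.
- move=> /free_FAnds_map [u _ /free_FAnds_map [u' _]].
  case: (adj u u') => //=; rewrite !in_cons in_nil orbF => /orP [] /eqP ->; by rewrite Hvi orbT.
- rewrite /= !in_cons in_nil orbF => /orP [] /eqP ->; by rewrite ?Hvi ?orbT.
- move=> /free_FAnds_map [u _ /free_Dist].
  by move=> /(_ (leq_trans (ltn0Sn _) (vi_lt u)) (vi_lt u)) /orP [] /eqP ->; rewrite ?Hvi ?orbT.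
- rewrite /= mem_filter => /andP [HxB]; rewrite mem_cat => /orP [|].
    move=> /(free_Dist (ltn0Sn _) (ltnSn _)) /orP [/eqP ->//|/eqP E].
    by rewrite E eqxx in HxB.
  move=> /free_FOrs_map [u _].
  rewrite !in_cons in_nil orbF => /orP [/eqP E|/eqP ->]; last by rewrite Hvi orbT.
  by rewrite E eqxx in HxB.
Qed.

Lemma within_induced_to (G : graph) (S : {set vert G}) s (a b : vert (induced S)) :
  within s a b -> within s (val a) (val b).
Proof.
elim: s b => [|s IH] b /=; first by move/eqP ->.
move=> /orP [/IH ->//|/existsP [z /andP [Hz Hzb]]].
apply/orP; right; apply/existsP; exists (val z). by rewrite IH.
Qed.

Lemma within_induced_from (G : graph) (S : {set vert G}) s (a b : vert (induced S)) :
  (forall y, within s (val a) y -> y \in S) -> within s (val a) (val b) -> within s a b.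
Proof.
elim: s b => [|s IH] b /= HS; first by move/eqP/val_inj ->.
have HS' : forall y, within s (val a) y -> y \in S.
  by move=> y Hy; apply: HS; apply: (within_mono (leqnSn s) Hy).
move=> /orP [/(IH _ HS') ->//|/existsP [z /andP [Hz Hzb]]].
have Hzm : z \in S by apply: HS'.
apply/orP; right; apply/existsP; exists (exist _ z Hzm).
by rewrite (IH (exist _ z Hzm) HS' Hz).
Qed.

Lemma isoR_ext (A B : graph) (pa pa' : pred (vert A)) (b : vert B) :
  pa' =1 pa -> isoR pa b -> isoR pa' b.
Proof. move=> E [f [g [fK gK Hr Ha]]]; exists f, g; split => // x; rewrite E; exact: Hr. Qed.

Lemma ball_induced (G : graph) (S : {set vert G}) (x0 : vert (induced S)) r :
  (forall y, within r (val x0) y -> y \in S) ->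
  isoR (A := ball x0 r) (fun a => val a == x0) (rootb (val x0) r).
Proof.
move=> HS.
have Hf : forall a : vert (ball x0 r), val (val a) \in [set y | within r (val x0) y].
  move=> a; rewrite inE; apply: within_induced_to; by have := valP a; rewrite inE.
have Hg1 : forall b : vert (ball (val x0) r), val b \in S.
  by move=> b; apply: HS; have := valP b; rewrite inE.
have Hg2 : forall b : vert (ball (val x0) r),
   (exist (fun y => y \in S) (val b) (Hg1 b)) \in [set y | within r x0 y].
  move=> b; rewrite inE; apply: within_induced_from => //=.
  by have := valP b; rewrite inE.
exists (fun a => exist (fun y => y \in [set y | within r (val x0) y]) (val (val a)) (Hf a)), (fun b => exist (fun y => y \in [set y | within r x0 y]) _ (Hg2 b)); split.
- by move=> a; do 2 apply: val_inj.
- by move=> b; apply: val_inj.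
- by move=> a /eqP Ha; apply: val_inj; rewrite /= Ha.
- by [].
Qed.

Lemma tenv0 (V : Type) (v : 'I_1 -> V) : tenv v 0 = Some (v ord0).
Proof. rewrite /tenv; case: insubP => [i _ Hi|] //=; congr (Some (v _)); exact: val_inj. Qed.

Lemma phiF_local (F : graph) (o : vert F) r : r_local 1 r (phiF o r).
Proof.
move=> G v. rewrite /models /models_local.
rewrite (@sem_phi _ o r _ (v ord0)) ?tenv0 //.
have Hm : v ord0 \in nbhd r v by rewrite inE; apply/existsP; exists ord0; apply: within_refl.
pose x' : vert (induced (nbhd r v)) := exist _ (v ord0) Hm.
rewrite (@sem_phi _ o r _ x'); last first.
  by rewrite tenv0 /= (insubT (fun y => y \in nbhd r v) Hm).
have HS : forall y, within r (val x') y -> y \in nbhd r v.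
  by move=> y Hy; rewrite inE; apply/existsP; exists ord0.
have I1 := ball_induced HS.
apply/idP/idP.
  move/isoP => H; apply/isoP; apply: isoR_trans I1 H. by rewrite /= eqxx.
move/isoP => H; apply/isoP.
have I2 := isoR_sym (a := rootb x' r) (@ball_rootE _ x' r) I1.
have H2 := isoR_trans (eqxx _ : (fun a : vert (ball x' r) => val a == x') (rootb x' r)) I2 H.
apply: isoR_ext H2 => a /=. by rewrite -ball_rootE.
Qed.

Lemma card_ffun1 (G : finType) (P : pred G) :
  #|[pred v : {ffun 'I_1 -> G} | P (v ord0)]| = #|[pred x | P x]|.
Proof.
have inj : injective (fun x : G => [ffun _ : 'I_1 => x]).
  by move=> x y /ffunP /(_ ord0); rewrite !ffunE.
rewrite -(card_imset [pred x | P x] inj).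
apply: eq_card => v; rewrite !inE /=.
apply/idP/imsetP => [H|[x Hx ->]]; last by rewrite ffunE.
exists (v ord0) => //. apply/ffunP => i; rewrite ffunE. by rewrite (ord1 i).
Qed.

Lemma dir21 (d : nat) (Gs : nat -> graph) : FOlocal1_convergent Gs -> BS_convergent d Gs.
Proof.
move=> H r F o _ _.
have := H (phiF o r) (conj (phiF_free o r) (ex_intro _ r (phiF_local o r))).
congr converges; apply: functional_extensionality => n; rewrite /stone expn1.
congr (Rdefinitions.Rdiv (Raxioms.INR _) _).
rewrite -card_ffun1. apply: eq_card => v; rewrite !inE /models.
by rewrite (@sem_phi _ o r _ (v ord0)) ?tenv0.
Qed.

Unset Implicit Arguments.
Set Strict Implicit.

Theorem theorem4p5 (d : nat) (Gs : nat -> graph)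
  (Hdeg : forall n, max_deg_le d (Gs n))
  (Hsize : forall M : nat, exists N : nat, forall n, N <= n -> M <= #|vert (Gs n)|) :
  (BS_convergent d Gs <-> FOlocal1_convergent Gs) /\
  (FOlocal1_convergent Gs <-> FOlocal_convergent Gs).
Proof.
split; split.
- move=> HBS f [_ [r Hr]]. exact: (main13 Hdeg Hsize HBS Hr).
- exact: dir21.
- move=> H p f [_ [r Hr]]. exact: (main13 Hdeg Hsize (dir21 H) Hr).
- move=> H f Hf; exact: H 1 f Hf.
Qed.
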